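(* Let $n$ be an even positive integer, let $V_0=\{v\in\{-1,1\}^n : v_1=1,\ \sum_i v_i=0\}$, let $P(V_0)=\{\sum_{v\in W}v : W\subseteq V_0\}$, and let $g(V_0)=\frac12\sum_{v\in V_0}v$. (1) If $n$ is not a power of $2$, then $g(V_0)\in P(V_0)$. (2) If $n$ is a power of $2$ and $n>2$, let $w\in\mathbb{Z}^n$ be given by $w_i=1$ if $i\not\equiv 0\pmod 4$ and $w_i=-3$ if $i\equiv 0\pmod 4$. Then $g(V_0)-\frac12 w\in P(V_0)$. *)

(* Defs.v *)
From mathcomp Require Import all_boot all_order all_algebra.
Set Implicit Arguments. Unset Strict Implicit. Unset Printing Implicit Defensive.
Import Order.TTheory GRing.Theory Num.Theory.
Local Open Scope ring_scope.

(* A vector of {-1,1}^n is encoded by its sign pattern b : {ffun 'I_n -> bool};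
   sgnv b is the actual vector (as a row vector over rat). Coordinates are
   0-indexed: coordinate v_i of the paper is entry (i-1). *)
Definition sgnb (x : bool) : rat := if x then 1 else -1.

Definition sgnv (n : nat) (b : {ffun 'I_n -> bool}) : 'rV[rat]_n :=
  \row_i sgnb (b i).

Definition V0 (n : nat) : {set {ffun 'I_n -> bool}} :=
  [set b | [forall i : 'I_n, (val i == 0)%N ==> (sgnv b 0 i == 1)]
           && (\sum_(i < n) sgnv b 0 i == 0)].

Definition inPV0 (n : nat) (x : 'rV[rat]_n) : Prop :=
  exists W : {set {ffun 'I_n -> bool}},
    W \subset V0 n /\ x = \sum_(b in W) sgnv b.

Definition gV0 (n : nat) : 'rV[rat]_n := 2^-1 *: \sum_(b in V0 n) sgnv b.

Definition wvec (n : nat) : 'rV[rat]_n :=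
  \row_(j < n) (if ((val j).+1 %% 4 == 0)%N then -3 else 1).

(* Main.v *)
Require Import Defs.
From mathcomp Require Import all_boot all_order all_algebra.
From mathcomp Require Import zify ring lra.
Set Implicit Arguments. Unset Strict Implicit. Unset Printing Implicit Defensive.
Import Order.TTheory GRing.Theory Num.Theory.
Local Open Scope ring_scope.

Section Adic.
Local Open Scope nat_scope.

Lemma logn2_odd k : logn 2 (2 * k).+1 = 0.
Proof. by apply: logn_coprime; rewrite coprime_sym coprimen2 /= oddM. Qed.

Lemma logn2_2 k : 0 < k -> logn 2 (2 * k) = (logn 2 k).+1.
Proof. by move=> Hk; rewrite lognM. Qed.

Lemma logn_fact_double k : logn 2 (2 * k)`! = k + logn 2 k`!.
Proof.
elim: k => [|k IH] //.
have -> : 2 * k.+1 = (2 * k).+2 by lia.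
rewrite !factS !lognM ?fact_gt0 ?muln_gt0 ?fact_gt0 // IH.
have -> : (2 * k).+2 = 2 * k.+1 by lia.
rewrite logn2_odd logn2_2 //; lia.
Qed.

Definition vC k := logn 2 'C(2 * k, k).

Lemma vC_eq k : vC k + logn 2 k`! = k.
Proof.
have E := bin_fact (leq_addl k k); rewrite addnK in E.
have e2 : k + k = 2 * k by lia.
rewrite e2 in E.
have := congr1 (logn 2) E; rewrite !lognM ?fact_gt0 ?bin_gt0 ?muln_gt0 ?fact_gt0 //.
  rewrite logn_fact_double /vC; lia.
lia.
Qed.

Lemma vC_double k : vC (2 * k) = vC k.
Proof.
have := vC_eq (2 * k); have := vC_eq k; rewrite logn_fact_double; lia.
Qed.

Lemma vC_odd k : vC (2 * k).+1 = (vC k).+1.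
Proof.
have := vC_eq (2 * k).+1; have := vC_eq k.
rewrite factS lognM ?fact_gt0 // logn2_odd logn_fact_double; lia.
Qed.

Lemma vC_pow j : vC (2 ^ j) = 1.
Proof. by elim: j => [|j IH] //; rewrite expnS vC_double. Qed.

Lemma vC_ge1 k : 0 < k -> 1 <= vC k.
Proof.
elim/ltn_ind: k => k IH Hk.
rewrite -(odd_double_half k); case Ho: (odd k) => /=.
  by rewrite -mul2n add1n vC_odd.
have Hh : 0 < k./2.
  by move: Hk; rewrite -{1}(odd_double_half k) Ho add0n double_gt0.
rewrite add0n -mul2n vC_double; apply: IH => //.
rewrite -{2}(odd_double_half k) Ho; lia.
Qed.

Lemma vC_ge2 k : 0 < k -> ~ (exists j, k = 2 ^ j) -> 2 <= vC k.
Proof.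
elim/ltn_ind: k => k IH Hk Hp.
rewrite -(odd_double_half k); case Ho: (odd k) => /=.
  rewrite -mul2n add1n vC_odd ltnS; apply: vC_ge1.
  rewrite lt0n; apply/negP => /eqP H0; apply: Hp; exists 0.
  by rewrite -(odd_double_half k) Ho H0.
have Hh : 0 < k./2.
  by move: Hk; rewrite -{1}(odd_double_half k) Ho add0n double_gt0.
rewrite add0n -mul2n vC_double; apply: IH => //.
  rewrite -{2}(odd_double_half k) Ho; lia.
move=> [j Hj]; apply: Hp; exists j.+1.
by rewrite -(odd_double_half k) Ho Hj expnS add0n -mul2n.
Qed.
End Adic.


Section Aux.
Lemma mod4_add (h r : nat) : (r < 4)%N -> ((4 * h + r) %% 4 = r)%N.
Proof. by move=> Hr; rewrite mulnC modnMDl modn_small. Qed.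

Lemma sum4 (F : nat -> rat) (h : nat) :
  \sum_(0 <= j < 4 * h) F (j %% 4)%N = h%:R * (F 0%N + F 1%N + F 2%N + F 3%N).
Proof.
elim: h => [|h IH]; first by rewrite muln0 big_geq // mul0r.
have -> : (4 * h.+1 = (4 * h).+4)%N by rewrite mulnS addnC !addnS addn0.
rewrite !big_nat_recr //= IH.
have e0 : ((4 * h) %% 4 = 0)%N by rewrite mulnC modnMl.
have e1 : ((4 * h).+1 %% 4 = 1)%N by rewrite -addn1 mod4_add.
have e2 : ((4 * h).+2 %% 4 = 2)%N by rewrite -addn2 mod4_add.
have e3 : ((4 * h).+3 %% 4 = 3)%N by rewrite -addn3 mod4_add.
rewrite e0 e1 e2 e3 -[h.+1]addn1 natrD; ring.
Qed.

Lemma sum_ind n (c : nat) (a : rat) : (c < n)%N ->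
  \sum_(j < n) (if nat_of_ord j == c then a else 0) = a.
Proof.
move=> Hc; rewrite (bigD1 (Ordinal Hc)) //= eqxx big1 ?addr0 // => j Hj.
case: eqP => // E; case/eqP: Hj; exact: val_inj.
Qed.
End Aux.


Section Bound.
Local Open Scope nat_scope.
Lemma gC_rec a : a.+2 * 'C(2 * a + 3, a.+1) = 2 * (2 * a + 3) * 'C(2 * a + 1, a).
Proof.
have e1 := mul_bin_diag (2 * a + 3) a.
have e2 := mul_bin_down (2 * a + 2) a.
have p1 : (2 * a + 3).-1 = 2 * a + 2 by lia.
have p2 : (2 * a + 2).-1 = 2 * a + 1 by lia.
have p3 : 2 * a + 2 - a = a.+2 by lia.
rewrite p1 in e1; rewrite p2 p3 in e2.
apply/eqP; rewrite -(eqn_pmul2l (ltn0Sn a)); apply/eqP.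
rewrite [LHS]mulnCA -e1 [LHS]mulnCA -e2; nia.
Qed.

Lemma gC_bound a : 3 <= a -> (2 * a + 1) * (2 * a - 1) <= 'C(2 * a + 1, a).
Proof.
elim: a => [|a IH] // Ha.
case: (eqVneq a 2) => [->|Ha2]; first by [].
have IH' := IH ltac:(lia).
have R := gC_rec a.
have -> : 2 * a.+1 + 1 = 2 * a + 3 by lia.
have -> : 2 * a.+1 - 1 = 2 * a + 1 by lia.
move: R IH'; set c1 := 'C(2 * a + 3, a.+1); set c0 := 'C(2 * a + 1, a) => R IH'.
set d := 2 * a - 1.
have H3 : 2 * (2 * a + 3) * ((2 * a + 1) * d) <= 2 * (2 * a + 3) * c0.
  by rewrite leq_mul2l IH' orbT.
have E : 2 * (2 * a + 3) * ((2 * a + 1) * d) = ((2 * a + 3) * (2 * a + 1)) * (2 * d) by ring.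
have H4 : a.+2 * ((2 * a + 3) * (2 * a + 1)) <= ((2 * a + 3) * (2 * a + 1)) * (2 * d).
  by rewrite mulnC leq_mul2l; apply/orP; right; rewrite /d; lia.
rewrite -(leq_pmul2l (ltn0Sn a.+1)) R; rewrite E in H3.
exact: leq_trans H4 H3.
Qed.
End Bound.

Section Main.
Variables N m : nat.
Hypothesis HN : (N.+1 = 2 * m)%N.
Hypothesis Hm2 : (2 <= m)%N.

Let N_gt0 : (0 < N)%N. Proof. lia. Qed.

Local Notation BF := {ffun 'I_N.+1 -> bool}.
Definition cntT (b : BF) : nat := (\sum_i (b i : nat))%N.

Lemma sgnvE (b : BF) i : sgnv b 0 i = sgnb (b i). Proof. by rewrite mxE. Qed.

Lemma sum_sgnb (b : BF) : \sum_i sgnb (b i) = (cntT b)%:R *+ 2 - (N.+1)%:R.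
Proof.
rewrite (eq_bigr (fun i => ((b i : nat)%:R *+ 2 - 1) : rat)); last first.
  by move=> i _; case: (b i) => /=; rewrite /sgnb //; ring.
rewrite sumrB sumrMnl sumr_const card_ord /cntT natr_sum.
by rewrite -[1 *+ N.+1]/((N.+1)%:R).
Qed.

Lemma inV0 (b : BF) : (b \in V0 N.+1) = b ord0 && (cntT b == m).
Proof.
rewrite inE; congr andb.
  apply/forallP/idP => [H | Hb i]; first by move: (H ord0); rewrite /= sgnvE; case: (b ord0).
  apply/implyP => /eqP Hi; have -> : i = ord0 by apply/val_inj.
  by rewrite sgnvE Hb.
rewrite (eq_bigr (fun i => sgnb (b i))); last by move=> i _; rewrite sgnvE.
rewrite sum_sgnb subr_eq0 -mulr_natr -natrM eqr_nat HN.
apply/eqP/eqP => H; lia.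
Qed.

Local Open Scope nat_scope.
Definition sh (t : nat) (i : 'I_N.+1) : 'I_N.+1 :=
  if val i == 0%N then i else inord ((i.-1 + t) %% N).+1.

Lemma val_sh t i : val (sh t i) = if val i == 0%N then 0%N else ((i.-1 + t) %% N).+1.
Proof.
rewrite /sh; case: eqP => [->|_] //=; rewrite inordK // ltnS ltn_pmod //.
Qed.

Lemma sh_comp t s i : sh t (sh s i) = sh (s + t) i.
Proof.
apply/val_inj; rewrite !val_sh; case Hi: (val i == 0%N) => //=.
by rewrite modnDml addnA.
Qed.

Lemma sh_modE t t' i : t %% N = t' %% N -> sh t i = sh t' i.
Proof.
move=> H; apply/val_inj; rewrite !val_sh; case: eqP => // _.
by rewrite -modnDmr H modnDmr.
Qed.

Lemma sh_id t i : t %% N = 0%N -> sh t i = i.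
Proof.
move=> H; rewrite (@sh_modE t 0) ?H ?mod0n //; apply/val_inj; rewrite val_sh.
case: eqP => // /eqP Hi; rewrite addn0 modn_small ?prednK ?lt0n //.
by rewrite -ltnS ltn_ord.
Qed.

Lemma modN_inv t : (t + (N - t %% N)) %% N = 0%N.
Proof.
rewrite {1}(divn_eq t N) -addnA (subnKC (ltnW (ltn_pmod t N_gt0))).
by rewrite -mulSnr modnMl.
Qed.

Lemma sh_inj t : injective (sh t).
Proof.
move=> i j H; have := congr1 (sh (N - t %% N)) H.
by rewrite !sh_comp !sh_id // modN_inv.
Qed.

Lemma sh_label t i : val (sh t i) = (val i + t * (val i != 0%N))%N %[mod N].
Proof.
rewrite val_sh; case: eqP => [->|/eqP Hi] /=; rewrite ?muln0 ?muln1 //.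
have := modnDml (i.-1 + t) 1 N; rewrite !addn1 => ->.
by rewrite -addSn prednK // lt0n.
Qed.

Lemma sh0 t : sh t ord0 = ord0. Proof. by rewrite /sh. Qed.

Definition act t (b : BF) : BF := [ffun i => b (sh t i)].
Definition wt (b : BF) : nat := (\sum_i (b i) * val i)%N.
Definition cnt0 (b : BF) : nat := (\sum_i (b i) * (val i != 0%N))%N.

Lemma wt_act t b : wt b = (wt (act t b) + t * cnt0 (act t b))%N %[mod N].
Proof.
rewrite /wt /cnt0 (reindex_inj (@sh_inj t)) /= big_distrr /= -big_split /=.
rewrite -modn_summ -[in RHS]modn_summ; congr (_ %% N)%N; apply eq_bigr => i _.
by rewrite ffunE -modnMmr sh_label modnMmr mulnDr mulnCA.
Qed.

Lemma act_comp t s b : act s (act t b) = act (t + s) b.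
Proof. by apply/ffunP => i; rewrite /act !ffunE sh_comp addnC. Qed.

Lemma act_id t b : t %% N = 0%N -> act t b = b.
Proof. by move=> H; apply/ffunP => i; rewrite /act ffunE sh_id. Qed.

Lemma cntT_act t b : cntT (act t b) = cntT b.
Proof.
by rewrite /cntT [in RHS](reindex_inj (@sh_inj t)); apply eq_bigr => i _; rewrite /act ffunE.
Qed.

Lemma act_V0 t b : (act t b \in V0 N.+1) = (b \in V0 N.+1).
Proof. by rewrite !inV0 cntT_act /act ffunE sh0. Qed.

Lemma cnt0E (b : BF) : b ord0 -> cnt0 b = (cntT b).-1.
Proof.
move=> Hb; rewrite /cnt0 /cntT !big_ord_recl /= Hb /= muln0 add0n.
by apply eq_bigr => i _; rewrite muln1.
Qed.

Lemma cnt0_V0 (b : BF) : b \in V0 N.+1 -> cnt0 b = m.-1.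
Proof. by rewrite inV0 => /andP [Hb /eqP <-]; rewrite cnt0E. Qed.

Lemma V0P (b : BF) : b \in V0 N.+1 -> b ord0 /\ (\sum_i sgnb (b i) = 0)%R.
Proof.
move=> H; have := H; rewrite inV0 => /andP [-> _]; split => //.
move: H; rewrite inE => /andP [_ /eqP E]; rewrite -[RHS]E.
by apply eq_bigr => i _; rewrite sgnvE.
Qed.

Lemma kinj t t' : t < N -> t' < N -> t * m.-1 = t' * m.-1 %[mod N] -> t = t'.
Proof.
move=> Ht Ht' H.
have e : N = (2 * m.-1).+1 by lia.
have h1 : t * (2 * m.-1) = t' * (2 * m.-1) %[mod N].
  by rewrite mulnCA -modnMmr H modnMmr mulnCA.
have h2 : forall x, (x + x * (2 * m.-1)) %% N = 0.
  move=> x; have -> : x + x * (2 * m.-1) = x * N by nia.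
  by rewrite modnMl.
have h3 : (t + t' * (2 * m.-1)) %% N = (t' + t' * (2 * m.-1)) %% N.
  by rewrite h2 -modnDmr -h1 modnDmr h2.
by move: h3; move/eqP; rewrite eqn_modDr (modn_small Ht) (modn_small Ht') => /eqP.
Qed.

Definition C0 : {set BF} := [set b in V0 N.+1 | wt b %% N == 0].
Definition fU (p : 'I_N * BF) : BF := act p.1 p.2.
Definition U (R : {set BF}) : {set BF} := fU @: setX [set: 'I_N] R.

Lemma act_inv t b : act ((N - t %% N) %% N) (act t b) = b.
Proof. by rewrite act_comp act_id // modnDmr modN_inv. Qed.

Lemma fU_inj (R : {set BF}) : R \subset C0 -> {in setX [set: 'I_N] R &, injective fU}.
Proof.
move=> HR [t b] [t' b'] /setXP [_ Hb] /setXP [_ Hb'] /= E.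
move/subsetP: HR => HR.
move: (HR _ Hb) (HR _ Hb') => /setIdP [Vb /eqP wb] /setIdP [Vb' /eqP wb'].
have c1 := wt_act t b; have c2 := wt_act t' b'.
rewrite /fU /= in E; rewrite E in c1.
rewrite !cnt0_V0 ?act_V0 // in c1 c2.
have htt : t = t' :> nat.
  apply: kinj => //; apply/eqP; rewrite -(eqn_modDl (wt (act t' b'))).
  by apply/eqP; rewrite -c1 -c2 wb wb'.
have ht : t = t' by apply/val_inj.
subst t'; congr pair.
by rewrite -(act_inv t b) E act_inv.
Qed.

Definition z : 'rV[rat]_N.+1 := \row_(j < N.+1) (if val j == 0 then (N%:R)%R else (-1)%R).

Lemma orbit_sum b : b \in V0 N.+1 -> (\sum_(t < N) sgnv (act t b) = z)%R.
Proof.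
move=> /V0P [Hb0 Hs]; apply/rowP => j; rewrite summxE !mxE.
under eq_bigr => t _ do rewrite mxE /act ffunE.
case: eqP => [Hj|/eqP Hj].
  have -> : j = ord0 by apply/val_inj.
  under eq_bigr => t _ do rewrite sh0 Hb0.
  by rewrite sumr_const card_ord.
pose rot (t : 'I_N) : 'I_N := Ordinal (ltn_pmod (j.-1 + t) N_gt0).
have rot_inj : injective rot.
  move=> t t' /(congr1 val) /= /eqP; rewrite eqn_modDl => /eqP.
  by rewrite !modn_small // => /val_inj.
transitivity (\sum_(u < N) sgnb (b (lift ord0 u)))%R.
  rewrite [RHS](reindex_inj rot_inj) /=; apply eq_bigr => t _.
  congr (sgnb (b _)); apply/val_inj => /=.
  by rewrite val_sh (negbTE Hj).
move/eqP: Hs; rewrite big_ord_recl Hb0 addrC addr_eq0 => /eqP H; exact: H.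
Qed.

Lemma C0_V0 : C0 \subset V0 N.+1.
Proof. by apply/subsetP => b /setIdP []. Qed.

Lemma sum_U (R : {set BF}) : R \subset C0 ->
  (\sum_(c in U R) sgnv c = #|R|%:R *: z)%R.
Proof.
move=> HR; rewrite big_imset /=; last exact: fU_inj.
transitivity (\sum_(t < N) \sum_(b in R) sgnv (act t b))%R.
  rewrite pair_big_dep; apply eq_bigl => -[t b] /=.
  by rewrite in_setX in_setT.
rewrite exchange_big /= (eq_bigr (fun _ => z)) ?sumr_const ?scaler_nat //.
move=> b Hb; apply: orbit_sum.
by apply: (subsetP C0_V0); apply: (subsetP HR).
Qed.

Lemma U_V0 (R : {set BF}) : R \subset C0 -> U R \subset V0 N.+1.
Proof.
move=> HR; apply/subsetP => c /imsetP [[t b] /setXP [_ Hb] ->].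
rewrite /fU /= act_V0; apply: (subsetP C0_V0); exact: (subsetP HR).
Qed.

Lemma V0_U : V0 N.+1 = U C0.
Proof.
apply/eqP; rewrite eqEsubset U_V0 // andbT; apply/subsetP => b Hb.
pose t := (wt b * (N - 2)) %% N.
have Hc : act t b \in C0.
  rewrite inE act_V0 Hb /=.
  have := wt_act t b; rewrite cnt0_V0 ?act_V0 //.
  have e : (N - 2) * m.-1 = N * (m - 2) + 1 by nia.
  have ht : (t * m.-1) %% N = wt b %% N.
    by rewrite /t modnMml -mulnA e mulnDr muln1 mulnA mulnAC modnMDl.
  move=> H; rewrite -modnDmr ht modnDmr in H.
  move/eqP: H; rewrite -{1}[wt b]add0n eqn_modDr mod0n eq_sym.
  by [].
apply/imsetP; exists (Ordinal (ltn_pmod (N - t %% N) N_gt0), act t b).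
  by rewrite in_setX in_setT.
by rewrite /fU /= act_inv.
Qed.

Lemma card_V0 : #|V0 N.+1| = (N * #|C0|)%N.
Proof.
rewrite V0_U card_in_imset; last exact: fU_inj.
by rewrite cardsX cardsT card_ord.
Qed.

Lemma sum_V0 : (\sum_(b in V0 N.+1) sgnv b = #|C0|%:R *: z)%R.
Proof. by rewrite V0_U sum_U. Qed.

Definition bf (A : {set 'I_N}) : BF :=
  [ffun i => if unlift ord0 i is Some j then j \in A else true].

Lemma bf_lift A j : bf A (lift ord0 j) = (j \in A).
Proof. by rewrite ffunE liftK. Qed.

Lemma bf0 A : bf A ord0. Proof. by rewrite ffunE unlift_none. Qed.

Lemma bf_inj : injective bf.
Proof. by move=> A B E; apply/setP => j; rewrite -!bf_lift E. Qed.

Lemma cntT_lift (b : BF) : cntT b = (b ord0 + #|[set j | b (lift ord0 j)]|)%N.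
Proof.
rewrite /cntT big_ord_recl; congr addn.
rewrite -sum1_card [RHS]big_mkcond /=; apply eq_bigr => j _.
by rewrite inE; case: (b _).
Qed.

Lemma V0_bf : V0 N.+1 = bf @: [set A : {set 'I_N} | #|A| == m.-1].
Proof.
apply/setP => b; apply/idP/imsetP.
  rewrite inV0 => /andP [Hb0 /eqP Hc].
  exists [set j | b (lift ord0 j)].
    by rewrite inE -(eqn_add2l 1) -Hc cntT_lift Hb0 add1n.
  apply/ffunP => i; rewrite ffunE; case: unliftP => [j ->|->].
    by rewrite inE.
  by rewrite Hb0.
move=> [A]; rewrite inE => /eqP HA ->.
rewrite inV0 bf0 /= cntT_lift bf0.
have -> : [set j | bf A (lift ord0 j)] = A by apply/setP => j; rewrite inE bf_lift.
by rewrite HA add1n prednK // ltnW.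
Qed.

Lemma card_V0_bin : #|V0 N.+1| = 'C(N, m.-1).
Proof. by rewrite V0_bf card_imset ?card_draws ?card_ord //; exact: bf_inj. Qed.

Lemma binC2 : ('C(N, m.-1) * 2 = 'C(2 * m, m))%N.
Proof.
have := mul_bin_diag (2 * m) m.-1; rewrite -HN /= prednK ?(ltnW Hm2) // HN => E.
apply/eqP; rewrite -(eqn_pmul2l (ltnW Hm2)) -E; apply/eqP; nia.
Qed.

Lemma logC : (logn 2 'C(N, m.-1)).+1 = vC m.
Proof.
rewrite /vC -binC2 lognM ?bin_gt0 // ?addn1 //; lia.
Qed.

Lemma oddN : odd N.
Proof. by have := congr1 odd HN; rewrite /= oddM /= => /negbFE. Qed.

Lemma C0_even : ~ (exists j, m = 2 ^ j) -> ~~ odd #|C0|.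
Proof.
move=> Hp; have := vC_ge2 (ltnW Hm2) Hp; rewrite -logC ltnS => H.
have : (2 ^ 1 %| 'C(N, m.-1))%N by rewrite pfactor_dvdn ?bin_gt0 //; lia.
rewrite -card_V0_bin card_V0 expn1 Gauss_dvdr ?dvdn2 //.
by rewrite coprime_sym coprimen2 oddN.
Qed.

Lemma C0_odd : (exists j, m = 2 ^ j) -> odd #|C0|.
Proof.
move=> [j Hj]; have := vC_pow j; rewrite -Hj -logC => /eqP; rewrite eqSS => /eqP H.
have : ~~ (2 ^ 1 %| 'C(N, m.-1))%N by rewrite pfactor_dvdn ?bin_gt0 ?H //; lia.
by rewrite -card_V0_bin card_V0 expn1 dvdn2 negbK oddM oddN.
Qed.

Lemma sub_card (A : {set BF}) k : (k <= #|A|)%N -> exists2 R : {set BF}, R \subset A & #|R| = k.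
Proof.
move=> /card_geqP [s [Us Ss Hs]]; exists [set x in s].
  by apply/subsetP => x; rewrite inE => /Hs.
by rewrite cardsE; move/card_uniqP: Us => ->.
Qed.

Lemma part1 : ~ (exists j, m = 2 ^ j) -> inPV0 (gV0 N.+1).
Proof.
move=> Hp; have He := C0_even Hp.
have [R HR cR] := @sub_card C0 (#|C0| %/ 2)%N (leq_div _ _).
exists (U R); split; first exact: U_V0.
rewrite sum_U // /gV0 sum_V0 scalerA cR; congr (_ *: z).
have E : #|C0| = (#|C0| %/ 2 * 2)%N by rewrite divnK // dvdn2.
by rewrite {1}E natrM; field.
Qed.

Section E.
Variable h : nat.
Hypothesis Hh : m = (2 * h)%N.

Let N4 : N.+1 = (4 * h)%N. Proof. lia. Qed.
Let h_gt0 : (0 < h)%N. Proof. lia. Qed.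

Definition bu0 (j : nat) : bool := (j %% 4 == 0) || (j %% 4 == 3).
Definition eu : BF := [ffun j : 'I_N.+1 => bu0 j].
Definition ex (b : nat) : BF := [ffun j : 'I_N.+1 =>
  if nat_of_ord j == 4 * b then false else if nat_of_ord j == (4 * b).+1 then true else bu0 j].
Definition ey (b : nat) : BF := [ffun j : 'I_N.+1 =>
  if nat_of_ord j == 0 then true else if (nat_of_ord j == 4 * b) || (nat_of_ord j == (4 * b).+1) then false
  else ~~ bu0 j].

Lemma bu0_4 b : bu0 (4 * b). Proof. by rewrite /bu0 mulnC modnMl. Qed.
Lemma bu0_41 b : bu0 (4 * b).+1 = false.
Proof. by rewrite /bu0 -addn1 mod4_add. Qed.

Lemma B4l b (j : 'I_N.+1) : nat_of_ord j = (4 * b)%N -> bu0 j.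
Proof. by move=> ->; exact: bu0_4. Qed.
Lemma B0l (j : 'I_N.+1) : nat_of_ord j = 0%N -> bu0 j.
Proof. by move=> ->. Qed.
Lemma B41l b (j : 'I_N.+1) : nat_of_ord j = (4 * b).+1 -> bu0 j = false.
Proof. by move=> ->; exact: bu0_41. Qed.

Lemma sg_ex b (j : 'I_N.+1) : (0 < b)%N -> (sgnb (ex b j) = sgnb (bu0 j)
  - (if nat_of_ord j == (4 * b)%N then 2 else 0) + (if nat_of_ord j == (4 * b)%N.+1 then 2 else 0))%R.
Proof. move=> Hb; rewrite ffunE; case: (eqVneq (nat_of_ord j) 0%N) => [E0|E0];   case: (eqVneq (nat_of_ord j) (4 * b)%N) => [E1|E1];   case: (eqVneq (nat_of_ord j) (4 * b).+1) => [E2|E2] /=; try lia;   rewrite ?(B0l E0) ?(B4l E1) ?(B41l E2) /sgnb /=; case: (bu0 j) => /=; lra. Qed.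

Lemma sg_ey b (j : 'I_N.+1) : (0 < b)%N -> (sgnb (ey b j) = - sgnb (bu0 j)
  + (if nat_of_ord j == 0%N then 2 else 0) - (if nat_of_ord j == (4 * b)%N.+1 then 2 else 0))%R.
Proof. move=> Hb; rewrite ffunE; case: (eqVneq (nat_of_ord j) 0%N) => [E0|E0];   case: (eqVneq (nat_of_ord j) (4 * b)%N) => [E1|E1];   case: (eqVneq (nat_of_ord j) (4 * b).+1) => [E2|E2] /=; try lia;   rewrite ?(B0l E0) ?(B4l E1) ?(B41l E2) /sgnb /=; case: (bu0 j) => /=; lra. Qed.

Lemma sum_eu : (\sum_(j < N.+1) sgnb (bu0 j) = 0)%R.
Proof.
rewrite -(big_mkord xpredT (fun j => sgnb (bu0 j))) N4.
rewrite (eq_bigr (fun j => sgnb (bu0 (j %% 4)))); last by move=> j _; rewrite /bu0 modn_mod.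
by rewrite (sum4 (fun r => sgnb (bu0 r))) /sgnb /bu0 /=; lra.
Qed.

Lemma inV0' (b : BF) : b ord0 -> (\sum_j sgnb (b j) = 0)%R -> b \in V0 N.+1.
Proof.
move=> H0 Hs; rewrite inE; apply/andP; split.
  apply/forallP => i; apply/implyP => /eqP Hi.
  have -> : i = ord0 by apply/val_inj.
  by rewrite sgnvE H0.
by apply/eqP; rewrite -[RHS]Hs; apply eq_bigr => i _; rewrite sgnvE.
Qed.

Lemma eu_V0 : eu \in V0 N.+1.
Proof.
apply: inV0'; first by rewrite ffunE.
by under eq_bigr => j _ do rewrite ffunE; exact: sum_eu.
Qed.

Lemma ex_V0 b : (0 < b)%N -> (b < h)%N -> ex b \in V0 N.+1.
Proof.
move=> H1 H2; apply: inV0'.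
  have e1 : (0 == 4 * b)%N = false by apply/eqP; lia.
  by rewrite ffunE /= e1.
under eq_bigr => j _ do rewrite sg_ex //.
rewrite big_split /= sumrB sum_eu !sum_ind; first (rewrite subrr; lra); lia.
Qed.

Lemma ey_V0 b : (0 < b)%N -> (b < h)%N -> ey b \in V0 N.+1.
Proof.
move=> H1 H2; apply: inV0'; first by rewrite ffunE.
under eq_bigr => j _ do rewrite sg_ey //.
rewrite sumrB big_split /= sumrN sum_eu !sum_ind; first lra; lia.
Qed.

Definition ef (p : 'I_h.-1 * bool) : BF := if p.2 then ey (p.1).+1 else ex (p.1).+1.
Definition E : {set BF} := eu |: [set ef p | p in [set: 'I_h.-1 * bool]].

Lemma ex_at b k : (k <= N)%N -> ex b (inord k) =
  if k == (4 * b)%N then false else if k == (4 * b).+1 then true else bu0 k.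
Proof. by move=> Hk; rewrite ffunE inordK. Qed.

Lemma ey_at b k : (k <= N)%N -> ey b (inord k) =
  if k == 0%N then true else if (k == (4 * b)%N) || (k == (4 * b).+1) then false
  else ~~ bu0 k.
Proof. by move=> Hk; rewrite ffunE inordK. Qed.

Lemma eu_at k : (k <= N)%N -> eu (inord k) = bu0 k.
Proof. by move=> Hk; rewrite ffunE inordK. Qed.

Lemma ef_inj : injective ef.
Proof.
move=> [i c] [i' c'] E.
have P k : (k <= N)%N -> ef (i, c) (inord k) = ef (i', c') (inord k) by rewrite E.
have Hi : ((4 * i.+1).+1 <= N)%N by have := ltn_ord i; lia.
have Hi0 : ((4 * i.+1) <= N)%N by lia.
have Hi' : ((4 * i'.+1).+1 <= N)%N by have := ltn_ord i'; lia.
have b1 : bu0 1 = false by [].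
case: (eqVneq (i : nat) (i' : nat)) => [Hii|Hii].
  have Hv : i = i' by apply/val_inj.
  subst i'; case: c c' E P => [] [] // E P;
  have := P 1%N N_gt0; rewrite /ef /= ?ey_at ?ex_at ?b1 //;
  repeat (case: eqP => ?; try lia); done.
exfalso; case: c c' E P => [] [] E P.
- have := P (4 * i.+1).+1 Hi; rewrite /ef /= !ey_at ?bu0_41 //;
  repeat (case: eqP => ?; try lia); done.
- have := P 1%N N_gt0; rewrite /ef /= ?ey_at ?ex_at ?b1 //;
  repeat (case: eqP => ?; try lia); done.
- have := P 1%N N_gt0; rewrite /ef /= ?ey_at ?ex_at ?b1 //;
  repeat (case: eqP => ?; try lia); done.
- have := P (4 * i.+1)%N Hi0; rewrite /ef /= !ex_at ?bu0_4 //;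
  repeat (case: eqP => ?; try lia); done.
Qed.

Lemma eu_notin : eu \notin [set ef p | p in [set: 'I_h.-1 * bool]].
Proof.
apply/imsetP => -[[i c] _ Hc].
have Hi : ((4 * i.+1).+1 <= N)%N by have := ltn_ord i; lia.
have Hi0 : ((4 * i.+1) <= N)%N by lia.
have b1 : bu0 1 = false by [].
case: c Hc => Hc.
  have := congr1 (fun f : BF => f (inord 1)) Hc; rewrite /ef /= ey_at ?eu_at ?b1 //.
  repeat (case: eqP => ?; try lia); done.
have := congr1 (fun f : BF => f (inord (4 * i.+1))) Hc; rewrite /ef /= ex_at ?eu_at ?bu0_4 //.
repeat (case: eqP => ?; try lia); done.
Qed.

Lemma E_V0 : E \subset V0 N.+1.
Proof.
apply/subsetP => b; rewrite in_setU1 => /orP [/eqP ->|/imsetP [[i c] _ ->]].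
  exact: eu_V0.
have := ltn_ord i => Hi.
case: c; rewrite /ef /=; [apply: ey_V0 | apply: ex_V0]; lia.
Qed.

Lemma card_E : (#|E| <= m.-1)%N.
Proof.
rewrite cardsU1 eu_notin card_imset; last exact: ef_inj.
by rewrite cardsT card_prod card_ord card_bool; lia.
Qed.

Lemma sum_Q (j : nat) : (j < 4 * h)%N ->
  (\sum_(i < h.-1) (if j == (4 * i.+1)%N then (2:rat) else 0) =
  if (j %% 4 == 0)%N && (j != 0%N) then 2 else 0)%R.
Proof.
move=> Hj; case: ifP => [/andP [/eqP Hm /eqP Hj0] | Hn].
  have Hc : ((j %/ 4).-1 < h.-1)%N by lia.
  transitivity (\sum_(i < h.-1) (if nat_of_ord i == (j %/ 4).-1 then (2:rat) else 0%R))%R;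
    last exact: sum_ind.
  apply eq_bigr => i _.
  have -> : (j == (4 * i.+1)%N) = (nat_of_ord i == (j %/ 4).-1) by apply/eqP/eqP; lia.
  by [].
rewrite big1 // => i _; case: eqP => // Ej; move: Hn; rewrite Ej modnMr /=.
by [].
Qed.

Lemma sum_E : (\sum_(b in E) sgnv b = 2^-1 *: (z - wvec N.+1))%R.
Proof.
rewrite big_setU1 ?eu_notin //= big_imset /=; last by move=> ? ? _ _; exact: ef_inj.
rewrite (eq_bigl xpredT); last by move=> p; rewrite in_setT.
rewrite -(pair_big xpredT xpredT (fun i c => sgnv (ef (i, c)))) /=.
apply/rowP => j; rewrite !mxE summxE.
under eq_bigr => i _ do rewrite summxE big_bool /= !mxE sg_ey // sg_ex //.
rewrite ffunE.
rewrite (eq_bigr (fun i : 'I_h.-1 => (if nat_of_ord j == 0%N then 2 else 0)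
   - (if nat_of_ord j == (4 * i.+1)%N then 2 else 0))%R); last by move=> i _ /=; repeat (case: eqP => _ /=); lra.
rewrite sumrB sumr_const card_ord sum_Q; last by rewrite -N4.
rewrite -[\val j]/(nat_of_ord j).
have eN : (N%:R : rat) = (4 * h%:R - 1)%R.
  have := congr1 (fun x : nat => (x%:R : rat)) N4; rewrite /= -natr1 natrM => E4; lra.
have eh : ((h.-1)%:R : rat) = (h%:R - 1)%R by rewrite -[in RHS](prednK h_gt0) -natr1 addrK.
have hw : ((nat_of_ord j).+1 %% 4 == 0)%N = (nat_of_ord j %% 4 == 3)%N.
  by apply/eqP/eqP; lia.
rewrite hw /bu0.
case: (eqVneq (nat_of_ord j) 0%N) => [->|E0] /=.
  by rewrite -[(2:rat) *+ h.-1]mulr_natr eh eN /sgnb /=; field.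
rewrite mul0rn.
have : (nat_of_ord j %% 4 < 4)%N by apply: ltn_pmod.
case: (nat_of_ord j %% 4)%N => [|[|[|[|r]]]] //= _; rewrite /sgnb /=; field.
Qed.
End E.

Definition rt (b : BF) := (wt b * (N - 2)) %% N.
Definition rep (b : BF) := act (rt b) b.

Lemma rep_C0 b : b \in V0 N.+1 -> rep b \in C0.
Proof.
move=> Hb; rewrite /rep; set t := rt b.
rewrite inE act_V0 Hb /=.
have := wt_act t b; rewrite cnt0_V0 ?act_V0 //.
have e : (N - 2) * m.-1 = N * (m - 2) + 1 by nia.
have ht : (t * m.-1) %% N = wt b %% N.
  by rewrite /t /rt modnMml -mulnA e mulnDr muln1 mulnA mulnAC modnMDl.
move=> H; rewrite -modnDmr ht modnDmr in H.
move/eqP: H; rewrite -{1}[wt b]add0n eqn_modDr mod0n eq_sym.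
by [].
Qed.

Lemma act_mod t b : act t b = act (t %% N) b.
Proof. by apply/ffunP => i; rewrite /act !ffunE (@sh_modE t (t %% N)) // modn_mod. Qed.

Lemma rep_act c t : c \in C0 -> rep (act t c) = c.
Proof.
move=> Hc.
have Hr : rep (act t c) \in C0 by apply: rep_C0; rewrite act_V0; exact: (subsetP C0_V0).
have Hinj := fU_inj (subxx C0).
have := Hinj (Ordinal (ltn_pmod (t + rt (act t c)) N_gt0), c)
             (Ordinal (ltn_pmod 0 N_gt0), rep (act t c)).
rewrite !in_setX !in_setT Hc Hr /fU /= => H.
have Eq : act ((t + rt (act t c)) %% N) c = act (0 %% N) (rep (act t c)).
  by rewrite [RHS]act_id ?mod0n // /rep act_comp -act_mod.
symmetry; exact: (congr1 snd (H isT isT Eq)).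
Qed.

Lemma part2 : (exists j, m = 2 ^ j) -> inPV0 (gV0 N.+1 - 2^-1 *: wvec N.+1)%R.
Proof.
move=> Hp; have Ho := C0_odd Hp.
have Hev : m = 2 * m./2.
  have [j Hj] := Hp; case: j Hj => [|j] Hj; first by rewrite expn0 in Hj; lia.
  by rewrite Hj expnS mul2n doubleK mul2n.
set h := m./2 in Hev.
set r := #|C0|./2.
have Hc : #|C0| = (2 * r).+1 by rewrite -{1}(odd_double_half #|C0|) Ho mul2n add1n.
have Hx : #|C0 :&: rep @: E h| <= m.-1.
  apply: leq_trans (subset_leq_card (subsetIr _ _)) _.
  exact: leq_trans (leq_imset_card _ _) (card_E Hev).
have Hb : r <= #|C0 :\: rep @: E h|.
  rewrite cardsD.
  case: (eqVneq m 2) => [Hm|Hm]; first by lia.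
  have Hm4 : 4 <= m by move: Hev Hm Hm2; lia.
  have B := gC_bound (a := m.-1) ltac:(lia).
  have eN : 2 * m.-1 + 1 = N by lia.
  rewrite eN -card_V0_bin card_V0 in B.
  have e2 : 2 * m.-1 - 1 = 2 * m - 3 by lia.
  rewrite e2 leq_pmul2l // in B.
  lia.
have [R HR cR] := sub_card Hb.
have HR0 : R \subset C0 by apply: subset_trans HR (subsetDl _ _).
exists (U R :|: E h); split.
  by rewrite subUset U_V0 ?(E_V0 Hev).
have Hd : [disjoint U R & E h].
  rewrite -setI_eq0; apply/eqP/setP => c; rewrite !inE; apply/negP.
  move=> /andP [/imsetP [[t b] /setXP [_ Hb'] ->] He].
  have Hb0 : b \in C0 by exact: (subsetP HR0).
  have Hin : b \in rep @: E h.
    apply/imsetP; exists (act t b); last by rewrite rep_act.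
    by rewrite /E in_setU1; exact: He.
  by move: (subsetP HR b Hb'); rewrite in_setD => /andP [/negP nb _].
rewrite (eq_bigl [predU U R & E h]); last by move=> c; rewrite !inE.
rewrite bigU // sum_U // (sum_E Hev) /gV0 sum_V0 Hc cR.
apply/rowP => j; rewrite !mxE.
have -> : (((2 * r).+1)%:R : rat) = (2 * r%:R + 1)%R by rewrite -natr1 natrM.
by field.
Qed.
End Main.

Unset Implicit Arguments.
Theorem lemma4p3 (n : nat) (hn : (0 < n)%N) (hev : ~~ odd n) :
  ((~ exists k : nat, n = (2 ^ k)%N) -> inPV0 (gV0 n)) /\
  ((exists k : nat, n = (2 ^ k)%N) -> (2 < n)%N ->
     inPV0 (gV0 n - 2^-1 *: wvec n)).
Proof.
case: n hn hev => [|N] // _ hev.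
set m := (N.+1)./2.
have HN : N.+1 = (2 * m)%N.
  by rewrite /m -{1}(odd_double_half N.+1) (negbTE hev) add0n mul2n.
have pw : (exists k, N.+1 = (2 ^ k)%N) <-> (exists j, m = (2 ^ j)%N).
  split => [[k Hk]|[j Hj]].
    case: k Hk => [|k] Hk.
      by rewrite expn0 in Hk; rewrite Hk in hev.
    by exists k; move: Hk; rewrite expnS HN; lia.
  by exists j.+1; rewrite expnS -Hj HN.
case: (leqP m 1) => Hm.
  split => [H|_ H]; last by lia.
  by exfalso; apply: H; exists 1%N; rewrite expn1; lia.
split => [Hp|Hp _].
  by apply: (part1 HN Hm) => Hj; apply: Hp; apply/pw.
exact: (part2 HN Hm (proj1 pw Hp)).
Qed.
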